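(* Let $Q$ be as in the context and $\kappa_1,\kappa_2$ weight functions. Then $\mathfrak B^*_{\max(\kappa_1,\kappa_2)}(Q)=\mathfrak B^*_{\kappa_1}(Q)\cup\mathfrak B^*_{\kappa_2}(Q)$, and this set is the least element (with respect to inclusion) of the family $\mathscr B^*(Q)=\{\mathfrak B^*_\kappa(Q):\kappa\text{ a weight function}\}$ containing both $\mathfrak B^*_{\kappa_1}(Q)$ and $\mathfrak B^*_{\kappa_2}(Q)$. In particular, if $\mathfrak B^*_{\kappa_i}(Q)=\mathfrak B^*_{\kappa_i'}(Q)$ for $i=1,2$, then $\mathfrak B^*_{\max(\kappa_1,\kappa_2)}(Q)=\mathfrak B^*_{\max(\kappa_1',\kappa_2')}(Q)$.
   Context: $\mathbb F\in\{\mathbb R,\mathbb C\}$. $A$ is an infinite-dimensional separable Banach space over $\mathbb F$ and $V_0\subsetneq V_1\subsetneq\cdots\subset A$ are finite-dimensional subspaces whose union $V$ is dense in $A$. $B$ is a Banach space over $\mathbb F$, $\alpha$ a reasonable crossnorm on $A\otimes B$, $A\hat\otimes_\alpha B$ the completion, $Q=((A,V);B;\alpha)$. $E_n(x):=\inf_{h\in V_n\otimes B}\|x-h\|_{A\hat\otimes_\alpha B}$. A weight function is $\kappa:\mathbb N\to(0,\infty)$ with $\sum\kappa(n)<\infty$. $\mathfrak B^*_\kappa(Q)=\{x:\prod_{n\ge1}(E_n(x))^{\kappa(n)}=0\}$ (equivalently $\sum_n\kappa(n)\ln E_n(x)=-\infty$). *)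

(* Defs.v *)
From Stdlib Require Import Reals ClassicalEpsilon.
Open Scope R_scope.

(** Real normed vector spaces (complex ones are covered by restricting
    scalars to R: norms, subspaces and distances are unchanged). *)
Record NormedSpace := {
  ns_car :> Type;
  ns_zero : ns_car;
  ns_add : ns_car -> ns_car -> ns_car;
  ns_opp : ns_car -> ns_car;
  ns_scal : R -> ns_car -> ns_car;
  ns_norm : ns_car -> R;
  ns_addA : forall x y z, ns_add x (ns_add y z) = ns_add (ns_add x y) z;
  ns_addC : forall x y, ns_add x y = ns_add y x;
  ns_add0 : forall x, ns_add x ns_zero = x;
  ns_addN : forall x, ns_add x (ns_opp x) = ns_zero;
  ns_scalA : forall a b x, ns_scal a (ns_scal b x) = ns_scal (a * b) x;
  ns_scal1 : forall x, ns_scal 1 x = x;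
  ns_scalDr : forall a x y, ns_scal a (ns_add x y) = ns_add (ns_scal a x) (ns_scal a y);
  ns_scalDl : forall a b x, ns_scal (a + b) x = ns_add (ns_scal a x) (ns_scal b x);
  ns_norm_ge0 : forall x, 0 <= ns_norm x;
  ns_norm_eq0 : forall x, ns_norm x = 0 -> x = ns_zero;
  ns_normZ : forall a x, ns_norm (ns_scal a x) = Rabs a * ns_norm x;
  ns_normD : forall x y, ns_norm (ns_add x y) <= ns_norm x + ns_norm y
}.

Arguments ns_zero {_}.
Arguments ns_add {_}.
Arguments ns_opp {_}.
Arguments ns_scal {_}.
Arguments ns_norm {_}.

Definition ns_dist {X : NormedSpace} (x y : X) : R := ns_norm (ns_add x (ns_opp y)).

Definition complete (X : NormedSpace) : Prop :=
  forall u : nat -> X,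
    (forall eps, 0 < eps -> exists N, forall m n, (N <= m)%nat -> (N <= n)%nat ->
        ns_dist (u m) (u n) < eps) ->
    exists l : X, forall eps, 0 < eps -> exists N, forall n, (N <= n)%nat ->
        ns_dist (u n) l < eps.

Definition is_subspace {X : NormedSpace} (S : X -> Prop) : Prop :=
  S ns_zero /\ (forall x y, S x -> S y -> S (ns_add x y)) /\
  (forall a x, S x -> S (ns_scal a x)).

(** Infimum of a set of reals (chosen classically; meaningful when the set is
    nonempty and bounded below, which is the case for distances). *)
Definition is_inf (P : R -> Prop) (m : R) : Prop :=
  (forall y, P y -> m <= y) /\ (forall m', (forall y, P y -> m' <= y) -> m' <= m).

Definition Rinf (P : R -> Prop) : R := epsilon (inhabits 0) (is_inf P).

Definition Eapprox {X : NormedSpace} (W : nat -> X -> Prop) (n : nat) (x : X) : R :=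
  Rinf (fun r => exists h, W n h /\ r = ns_dist x h).

Definition is_weight (kappa : nat -> R) : Prop :=
  (forall n, 0 < kappa n) /\ exists l, Un_cv (sum_f_R0 kappa) l.

Definition rpow0 (e k : R) : R := if Rlt_dec 0 e then Rpower e k else 0.

Fixpoint pprod (f : nat -> R) (N : nat) : R :=
  match N with
  | O => 1
  | S m => pprod f m * f (S m)
  end.

Definition Bstar {X : NormedSpace} (W : nat -> X -> Prop) (kappa : nat -> R) (x : X) : Prop :=
  Un_cv (pprod (fun n => rpow0 (Eapprox W n x) (kappa n))) 0.

Definition in_Bfamily {X : NormedSpace} (W : nat -> X -> Prop) (S : X -> Prop) : Prop :=
  exists kappa, is_weight kappa /\ forall x, S x <-> Bstar W kappa x.

Definition kmax (k1 k2 : nat -> R) : nat -> R := fun n => Rmax (k1 n) (k2 n).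

(* Main.v *)
Require Import Defs.
From Stdlib Require Import Reals Lra Lia Classical ClassicalEpsilon FunctionalExtensionality.
Open Scope R_scope.

Lemma Rpower_pos x y : 0 < Rpower x y.
Proof. unfold Rpower; apply exp_pos. Qed.

Lemma Lpow e M d b : 0 < e <= M -> 1 <= M -> 0 <= d <= b -> Rpower e d <= Rpower M b.
Proof.
  intros He HM Hd. apply Rle_trans with (Rpower M d).
  apply Rle_Rpower_l; lra. apply Rle_Rpower; lra.
Qed.

Lemma rpow0_ge0 e k : 0 <= rpow0 e k.
Proof. unfold rpow0; destruct (Rlt_dec 0 e); [left; apply Rpower_pos| lra]. Qed.

Lemma pprod_ge0 f N : (forall n, 0 <= f n) -> 0 <= pprod f N.
Proof. intros H; induction N; simpl; [lra|]. apply Rmult_le_pos; auto. Qed.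

Lemma pprod_mul f g N : pprod (fun n => f n * g n) N = pprod f N * pprod g N.
Proof. induction N; simpl; [ring|]. rewrite IHN; ring. Qed.

Lemma pprod_le f g N : (forall n, 0 <= f n <= g n) -> pprod f N <= pprod g N.
Proof.
  intros H; induction N; simpl; [lra|].
  apply Rmult_le_compat; auto. apply pprod_ge0; intro; apply H. apply H. apply H.
Qed.

Lemma term_bound e M k : e <= M -> 1 <= M -> 0 < k -> rpow0 e k <= Rpower M k.
Proof.
  intros; unfold rpow0; destruct (Rlt_dec 0 e).
  apply Lpow; lra. left; apply Rpower_pos.
Qed.

Lemma term1 e M a b : e <= M -> 1 <= M -> 0 < a -> 0 < b ->
  rpow0 e (Rmax a b) <= rpow0 e a * Rpower M b.
Proof.
  intros; unfold rpow0; destruct (Rlt_dec 0 e); [|lra].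
  replace (Rmax a b) with (a + (Rmax a b - a)) by ring.
  rewrite Rpower_plus. apply Rmult_le_compat_l. left; apply Rpower_pos.
  apply Lpow; try lra. unfold Rmax; destruct (Rle_dec a b); lra.
Qed.

Lemma term2 e M a b : e <= M -> 1 <= M -> 0 < a -> 0 < b ->
  rpow0 e a * rpow0 e b <= rpow0 e (Rmax a b) * Rpower M a.
Proof.
  intros; unfold rpow0; destruct (Rlt_dec 0 e); [|lra].
  rewrite <- Rpower_plus.
  replace (a + b) with (Rmax a b + Rmin a b)
    by (unfold Rmax, Rmin; destruct (Rle_dec a b); ring).
  rewrite Rpower_plus. apply Rmult_le_compat_l. left; apply Rpower_pos.
  apply Lpow; try lra. unfold Rmin; destruct (Rle_dec a b); lra.
Qed.

Lemma sum_growing k : (forall n, 0 < k n) -> Un_growing (sum_f_R0 k).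
Proof. intros H n; simpl; specialize (H (S n)); lra. Qed.

Lemma sum_ge0 k : (forall n, 0 < k n) -> forall n, 0 <= sum_f_R0 k n.
Proof. intros H n; induction n; simpl; [specialize (H 0%nat)|specialize (H (S n))]; lra. Qed.

Lemma weight_bound k : is_weight k -> exists C, 1 <= C /\ forall M, 1 <= M ->
  forall n, Rpower M (sum_f_R0 k n) <= Rpower M C.
Proof.
  intros [Hp [l Hl]]. exists (Rmax 1 l). split. apply Rmax_l.
  intros M HM n. apply Rle_Rpower; auto.
  apply Rle_trans with l. apply growing_ineq; auto. apply sum_growing; auto.
  apply Rmax_r.
Qed.

Lemma pprodM_bound M k N : 1 <= M -> (forall n, 0 < k n) ->
  pprod (fun n => Rpower M (k n)) N <= Rpower M (sum_f_R0 k N).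
Proof.
  intros HM Hk; induction N; simpl.
  rewrite <- (Rpower_O M) by lra. apply Rle_Rpower; auto. left; auto.
  rewrite Rpower_plus. apply Rmult_le_compat_r. left; apply Rpower_pos. auto.
Qed.

Lemma quasi_mono e M k N j : (forall n, e n <= M) -> 1 <= M -> (forall n, 0 < k n) ->
  pprod (fun n => rpow0 (e n) (k n)) (N + j) <=
  pprod (fun n => rpow0 (e n) (k n)) N * Rpower M (sum_f_R0 k (N + j) - sum_f_R0 k N).
Proof.
  intros He HM Hk; induction j.
  rewrite Nat.add_0_r. replace (sum_f_R0 k N - sum_f_R0 k N) with 0 by ring.
  rewrite Rpower_O by lra. lra.
  replace (N + S j)%nat with (S (N + j)) by lia. simpl pprod. simpl sum_f_R0.
  replace (sum_f_R0 k (N + j) + k (S (N + j)) - sum_f_R0 k N) with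
    ((sum_f_R0 k (N + j) - sum_f_R0 k N) + k (S (N + j))) by ring.
  rewrite Rpower_plus, <- Rmult_assoc.
  apply Rmult_le_compat. apply pprod_ge0; intro; apply rpow0_ge0. apply rpow0_ge0.
  auto. apply term_bound; auto.
Qed.

Section Core.
Variables (e : nat -> R) (M : R) (HM : 1 <= M) (He : forall n, e n <= M).

Definition F k N := pprod (fun n => rpow0 (e n) (k n)) N.

Lemma F_ge0 k N : 0 <= F k N.
Proof. apply pprod_ge0; intro; apply rpow0_ge0. Qed.

Lemma not_cv_lower k : is_weight k -> ~ Un_cv (F k) 0 ->
  exists d, 0 < d /\ forall N, d <= F k N.
Proof.
  intros Hw Hn. destruct (weight_bound k Hw) as [C [HC HB]].
  assert (exists eps, 0 < eps /\ forall N, exists n, (n >= N)%nat /\ eps <= F k n) as [eps [Heps H]].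
  { apply NNPP; intro H; apply Hn; intros eps Heps.
    apply NNPP; intro H2; apply H; exists eps; split; auto; intro N.
    apply NNPP; intro H3; apply H2; exists N; intros n Hn'.
    unfold R_dist; rewrite Rminus_0_r, Rabs_right by (apply Rle_ge, F_ge0).
    apply Rnot_le_lt; intro; apply H3; exists n; auto. }
  exists (eps / Rpower M C). split. apply Rdiv_lt_0_compat; auto; apply Rpower_pos.
  intro N. destruct (H N) as [n [Hn1 Hn2]].
  replace n with (N + (n - N))%nat in Hn2 by lia.
  pose proof (quasi_mono e M k N (n - N) He HM (proj1 Hw)) as Q. fold (F k) in Q.
  assert (Rpower M (sum_f_R0 k (N + (n - N)) - sum_f_R0 k N) <= Rpower M C).
  { eapply Rle_trans; [|apply (HB M HM (N + (n-N))%nat)]. apply Rle_Rpower; auto.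
    pose proof (sum_ge0 k (proj1 Hw) N); lra. }
  assert (eps <= F k N * Rpower M C).
  { eapply Rle_trans; [apply Hn2|]. eapply Rle_trans; [apply Q|].
    apply Rmult_le_compat_l; auto. apply F_ge0. }
  pose proof (Rpower_pos M C).
  unfold Rdiv. apply Rmult_le_reg_r with (Rpower M C); auto.
  rewrite Rmult_assoc, Rinv_l by lra. lra.
Qed.

Lemma core k1 k2 : is_weight k1 -> is_weight k2 ->
  (Un_cv (F (kmax k1 k2)) 0 <-> Un_cv (F k1) 0 \/ Un_cv (F k2) 0).
Proof.
  intros H1 H2.
  destruct (weight_bound k1 H1) as [C1 [HC1 HB1]].
  destruct (weight_bound k2 H2) as [C2 [HC2 HB2]].
  pose proof (Rpower_pos M C1). pose proof (Rpower_pos M C2).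
  split.
  - intro Hm. apply NNPP; intro Hn.
    destruct (not_cv_lower k1 H1 ltac:(tauto)) as [d1 [Hd1 L1]].
    destruct (not_cv_lower k2 H2 ltac:(tauto)) as [d2 [Hd2 L2]].
    assert (Hprod : forall N, d1 * d2 <= F (kmax k1 k2) N * Rpower M C1).
    { intro N. apply Rle_trans with (F k1 N * F k2 N).
      apply Rmult_le_compat; try lra; auto.
      unfold F; rewrite <- pprod_mul.
      eapply Rle_trans. apply pprod_le with (g := fun n => rpow0 (e n) (kmax k1 k2 n) * Rpower M (k1 n)).
      intro n; split. apply Rmult_le_pos; apply rpow0_ge0.
      apply term2; auto. apply H1. apply H2.
      rewrite pprod_mul. apply Rmult_le_compat_l. apply pprod_ge0; intro; apply rpow0_ge0.
      eapply Rle_trans. apply pprodM_bound; auto. apply H1. apply HB1; auto. }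
    destruct (Hm (d1 * d2 / Rpower M C1)) as [N HN].
    apply Rdiv_lt_0_compat; auto. apply Rmult_lt_0_compat; auto.
    specialize (HN N (le_n N)). specialize (Hprod N).
    unfold R_dist in HN; rewrite Rminus_0_r, Rabs_right in HN by (apply Rle_ge, F_ge0).
    apply (Rmult_lt_compat_r (Rpower M C1)) in HN; auto.
    unfold Rdiv in HN; rewrite Rmult_assoc, Rinv_l in HN by lra. lra.
  - assert (Gen : forall a b Cb, is_weight a -> is_weight b ->
       (forall M, 1 <= M -> forall n, Rpower M (sum_f_R0 b n) <= Rpower M Cb) ->
       Un_cv (F a) 0 -> forall N, F (fun n => Rmax (a n) (b n)) N <= F a N * Rpower M Cb).
    { intros a b Cb Ha Hb HBb Hc N. unfold F.
      eapply Rle_trans. apply pprod_le with (g := fun n => rpow0 (e n) (a n) * Rpower M (b n)).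
      intro n; split. apply rpow0_ge0. apply term1; auto. apply Ha. apply Hb.
      rewrite pprod_mul. apply Rmult_le_compat_l. apply pprod_ge0; intro; apply rpow0_ge0.
      eapply Rle_trans. apply pprodM_bound; auto. apply Hb. apply HBb; auto. }
    assert (Sq : forall C G, 0 < C -> (forall N, 0 <= F (kmax k1 k2) N <= G N * C) ->
       Un_cv G 0 -> Un_cv (F (kmax k1 k2)) 0).
    { intros C G HC HG Hc eps Heps. destruct (Hc (eps / C)) as [N HN].
      apply Rdiv_lt_0_compat; auto.
      exists N; intros n Hn. specialize (HN n Hn). specialize (HG n).
      unfold R_dist in *. rewrite Rminus_0_r in *.
      rewrite Rabs_right by lra.
      apply Rle_lt_trans with (G n * C). lra.
      apply Rle_lt_trans with (Rabs (G n) * C).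
      apply Rmult_le_compat_r; [lra| apply RRle_abs].
      apply (Rmult_lt_compat_r C) in HN; auto.
      unfold Rdiv in HN; rewrite Rmult_assoc, Rinv_l in HN by lra. lra. }
    intros [Hc|Hc].
    + apply Sq with (Rpower M C2) (F k1); auto. intro N; split. apply F_ge0.
      apply (Gen k1 k2 C2); auto.
    + apply Sq with (Rpower M C1) (F k2); auto. intro N; split. apply F_ge0.
      unfold kmax. replace (fun n => Rmax (k1 n) (k2 n)) with (fun n => Rmax (k2 n) (k1 n))
        by (apply functional_extensionality; intro; apply Rmax_comm).
      apply (Gen k2 k1 C1); auto.
Qed.
End Core.

Lemma opp0 (X : NormedSpace) : ns_opp (@ns_zero X) = ns_zero.
Proof.
  pose proof (ns_addN X ns_zero) as H. rewrite ns_addC, ns_add0 in H. exact H.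
Qed.

Lemma Eapprox_le (X : NormedSpace) (W : nat -> X -> Prop) n x :
  W n ns_zero -> Eapprox W n x <= ns_norm x.
Proof.
  intro H0. unfold Eapprox, Rinf.
  set (P := fun r => exists h, W n h /\ r = ns_dist x h).
  assert (HP : P (ns_norm x)).
  { exists ns_zero; split; auto. unfold ns_dist; rewrite opp0, ns_add0; auto. }
  assert (Ex : exists m, is_inf P m).
  { destruct (completeness (fun r => P (- r))) as [m [Hm1 Hm2]].
    - exists 0; intros r [h [_ Hr]]. pose proof (ns_norm_ge0 X (ns_add x (ns_opp h))).
      unfold ns_dist in Hr; lra.
    - exists (- ns_norm x); rewrite Ropp_involutive; auto.
    - exists (- m); split.
      + intros y Hy. assert (-y <= m) by (apply Hm1; rewrite Ropp_involutive; auto). lra.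
      + intros m' Hm'. assert (m <= - m').
        { apply Hm2. intros r Hr. specialize (Hm' _ Hr). lra. } lra. }
  pose proof (epsilon_spec (inhabits 0) (is_inf P) Ex) as [H1 _].
  apply H1; auto.
Qed.

Lemma kmax_weight k1 k2 : is_weight k1 -> is_weight k2 -> is_weight (kmax k1 k2).
Proof.
  intros [P1 [l1 H1]] [P2 [l2 H2]].
  assert (Pm : forall n, 0 < kmax k1 k2 n).
  { intro n; unfold kmax; specialize (P1 n); pose proof (Rmax_l (k1 n) (k2 n)); lra. }
  split; auto.
  destruct (growing_cv (sum_f_R0 (kmax k1 k2))) as [l Hl].
  apply sum_growing; auto.
  exists (l1 + l2). intros r [i ->].
  apply Rle_trans with (sum_f_R0 k1 i + sum_f_R0 k2 i).
  rewrite <- sum_plus. apply sum_Rle. intros n _. unfold kmax.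
  specialize (P1 n); specialize (P2 n). unfold Rmax; destruct (Rle_dec (k1 n) (k2 n)); lra.
  apply Rplus_le_compat; apply growing_ineq; auto; apply sum_growing; auto.
  exists l; auto.
Qed.

Lemma part1 (X : NormedSpace) (W : nat -> X -> Prop)
  (Wsub : forall n, is_subspace (W n)) k1 k2 :
  is_weight k1 -> is_weight k2 ->
  forall x, Bstar W (kmax k1 k2) x <-> (Bstar W k1 x \/ Bstar W k2 x).
Proof.
  intros H1 H2 x. unfold Bstar.
  apply (core (fun n => Eapprox W n x) (Rmax 1 (ns_norm x))); auto.
  apply Rmax_l. intro n. eapply Rle_trans; [|apply Rmax_r].
  apply Eapprox_le. apply (Wsub n).
Qed.

Theorem proposition2p9
  (X : NormedSpace) (Xcomplete : complete X)
  (W : nat -> X -> Prop)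
  (Wsub : forall n, is_subspace (W n))
  (Wmono : forall n x, W n x -> W (S n) x)
  (Wdense : forall x eps, 0 < eps -> exists n h, W n h /\ ns_dist x h < eps)
  (k1 k2 : nat -> R) (hk1 : is_weight k1) (hk2 : is_weight k2) :
  (forall x, Bstar W (kmax k1 k2) x <-> (Bstar W k1 x \/ Bstar W k2 x))
  /\ in_Bfamily W (Bstar W (kmax k1 k2))
  /\ (forall S, in_Bfamily W S ->
        (forall x, Bstar W k1 x -> S x) -> (forall x, Bstar W k2 x -> S x) ->
        forall x, Bstar W (kmax k1 k2) x -> S x)
  /\ (forall k1' k2', is_weight k1' -> is_weight k2' ->
        (forall x, Bstar W k1 x <-> Bstar W k1' x) ->
        (forall x, Bstar W k2 x <-> Bstar W k2' x) ->
        forall x, Bstar W (kmax k1 k2) x <-> Bstar W (kmax k1' k2') x).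
Proof.
  pose proof (part1 X W Wsub k1 k2 hk1 hk2) as P.
  split; [exact P|]. split.
  { exists (kmax k1 k2); split; [apply kmax_weight; auto| tauto]. }
  split.
  { intros S _ HS1 HS2 x Hx. apply P in Hx as [Hx|Hx]; auto. }
  intros k1' k2' h1 h2 E1 E2 x.
  rewrite P, (part1 X W Wsub k1' k2' h1 h2), E1, E2. tauto.
Qed.
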